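(* Let $X$ be a (not necessarily locally compact) Hausdorff topological vector space, let $k:X\times X\to[0,+\infty]$ be a lower semicontinuous, symmetric, convex kernel function on $X\times X$, let $H\subset X$ be a bounded set with boundary $\partial H$, and let $\mu$ be a regular Borel probability measure on $X$. Then $\sup_{x\in H}U^\mu(x)=\sup_{x\in\partial H}U^\mu(x)$, where $U^\mu(x)=\int_X k(x,y)\,d\mu(y)$. *)

(* Defs.v *)
From HB Require Import structures.
From mathcomp Require Import all_boot all_order all_algebra.
From mathcomp Require Import all_classical all_reals all_analysis.
Set Implicit Arguments. Unset Strict Implicit. Unset Printing Implicit Defensive.
Import Order.TTheory GRing.Theory Num.Theory.
Local Open Scope classical_set_scope.
Local Open Scope ring_scope.

(* X viewed as a pointed type (pointed at 0), needed for the generated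
   sigma-algebra construction. *)
Definition ptd {R : realType} (X : topologicalLmodType R) : Type := X.
Section ptd_instances.
Context (R : realType) (X : topologicalLmodType R).
HB.instance Definition _ := Choice.on (ptd X).
HB.instance Definition _ := isPointed.Build (ptd X) (0 : X).
End ptd_instances.
Notation borelType X := (g_sigma_algebraType (@open X : set (set (ptd X)))).

Definition boundary (X : topologicalType) (H : set X) : set X :=
  closure H `\` interior H.

Definition tvs_bounded (R : realType) (X : topologicalLmodType R) (H : set X) :=
  forall V : set X, nbhs 0 V ->
    exists2 s : R, 0 < s & forall t : R, s < t -> H `<=` [set t *: v | v in V].

Definition regular_measure (R : realType) (X : topologicalLmodType R)
    (mu : set (borelType X) -> \bar R) :=
  forall A : set X, @measurable _ (borelType X) A ->
    mu A = ereal_sup [set mu K | K in [set K : set X | compact K /\ K `<=` A]] /\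
    mu A = ereal_inf [set mu U | U in [set U : set X | open U /\ A `<=` U]].

Definition convex_kernel (R : realType) (X : lmodType R) (k : X -> X -> \bar R) :=
  forall (x1 y1 x2 y2 : X) (t : R), 0 < t < 1 ->
    (k (t *: x1 + (1 - t) *: x2)%R (t *: y1 + (1 - t) *: y2)%R
      <= t%:E * k x1 y1 + (1 - t)%:E * k x2 y2)%E.

Definition symmetric_kernel (X : Type) (R : realType) (k : X -> X -> \bar R) :=
  forall x y, k x y = k y x.

Definition potential (R : realType) (X : topologicalLmodType R)
    (mu : set (borelType X) -> \bar R) (k : X -> X -> \bar R) (x : X) : \bar R :=
  (\int[mu]_(y in [set: borelType X]) k x y)%E.

(* Main.v *)
Require Import Defs.
From HB Require Import structures.
From mathcomp Require Import all_boot all_order all_algebra finmap.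
From mathcomp Require Import all_classical all_reals all_analysis.
From mathcomp Require Import measurable_realfun.
From mathcomp Require Import ring lra.
Import Order.TTheory GRing.Theory Num.Theory.
Local Open Scope classical_set_scope.
Local Open Scope ring_scope.

Lemma near_all {T : topologicalType} {b : T} {I : eqType} {s : seq I}
  {P : I -> T -> Prop} :
  (forall i, i \in s -> \forall x \near b, P i x) ->
  \forall x \near b, forall i, i \in s -> P i x.
Proof.
elim: s => [|i s IH] Hs.
  by apply: nearW => x j; rewrite in_nil.
have h1 := Hs i (mem_head _ _).
have h2 := IH (fun j js => Hs j (mem_behead (s := i :: s) js)).
near=> x => j; rewrite in_cons => /orP[/eqP ->|js].
  exact: (near h1 x).
by apply: (near h2 x).
Unshelve. all: end_near.
Qed.

Section S6.
Context (R : realType).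
Local Open Scope ereal_scope.

Lemma fin_sum_approx (I : eqType) (T : Type) (d0 : T) (s : seq I)
  (a : I -> \bar R) (g : I -> T -> \bar R) (P : I -> T -> Prop) (c : R) :
  uniq s -> (forall i, i \in s -> a i \is a fin_num) ->
  (forall i (e : R), i \in s -> e%:E < a i -> exists t, P i t /\ e%:E < g i t) ->
  c%:E < \sum_(i <- s) a i ->
  exists F : I -> T, (forall i, i \in s -> P i (F i)) /\
     c%:E < \sum_(i <- s) g i (F i).
Proof.
elim: s c => [|i s IH] c.
  move=> _ _ _ c0; exists (fun _ => d0); rewrite big_nil in c0; split; [by move=> ?; rewrite in_nil | by rewrite big_nil].
move=> /= /andP[nis us] afin Happ.
rewrite big_cons.
have ai : a i \is a fin_num by apply: afin; rewrite mem_head.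
rewrite -(fineK ai) => cS.
pose S' := \sum_(j <- s) a j.
have hd : exists2 d : R, (c - fine (a i))%:E < d%:E & d%:E < S'.
  move: cS; rewrite -lteBlDl // -EFinB.
  rewrite -/S'; case: S' => [s'| |] //=.
  - move=> hs; exists ((c - fine (a i) + s') / 2)%R.
      by rewrite lte_fin midf_lt.
    by rewrite lte_fin midf_lt.
  - by move=> _; exists (c - fine (a i) + 1)%R; rewrite ?ltry // lte_fin ltrDl.
have [d dl dr] := hd.
have [F' [HF' HS']] := IH d us
  (fun j jin => afin j ((mem_behead (s := i :: s) jin)))
  (fun j e jin => Happ j e ((mem_behead (s := i :: s) jin))) dr.
have cda : (c - d)%R%:E < a i.
  by rewrite -(fineK ai) lte_fin ltrBlDl -ltrBlDr; rewrite lte_fin in dl.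
have [t [Pt gt]] := Happ i (c - d)%R (mem_head _ _) cda.
exists (fun j => if j == i then t else F' j); split.
  move=> j; rewrite in_cons => /orP[/eqP ->|js]; first by rewrite eqxx.
  have -> : (j == i) = false by apply/negbTE; apply: contraNneq nis => <-.
  exact: HF'.
rewrite big_cons eqxx.
rewrite (eq_big_seq (fun j => g j (F' j))); last first.
  move=> j js; have -> // : (j == i) = false.
  by apply/negbTE; apply: contraNneq nis => <-.
have -> : c = ((c - d) + d)%R by rewrite subrK.
by rewrite EFinD; apply: lteD.
Qed.
End S6.

Section S1.
Context (R : realType) (X : topologicalLmodType R) (k : X -> X -> \bar R).
Hypothesis klsc : lower_semicontinuous (fun p : X * X => k p.1 p.2).

Lemma lsc_snd x : lower_semicontinuous (k x).
Proof.
move=> y a ayk; have [V nV HV] := klsc (x, y) a ayk.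
move: nV => [[A B] /= [nA nB] AB].
exists B => // z Bz; apply: (HV (x, z)); apply: AB; split => //=.
exact: nbhs_singleton.
Qed.

Lemma k_meas x : measurable_fun [set: borelType X] (k x).
Proof.
apply: (measurability _ (ErealGenOInfty.measurableE R)).
move=> /= _ [_ [a ->]] <-; apply: measurableI => //.
apply: sub_sigma_algebra.
rewrite preimage_itvoy.
by move/lower_semicontinuousP : (lsc_snd x); apply.
Qed.
End S1.

Section S3.
Context (R : realType) (X : topologicalLmodType R) (k : X -> X -> \bar R).
Context (mu : probability (borelType X) R).
Hypothesis k0 : forall x y, (0 <= k x y)%E.
Hypothesis kmeas : forall x, measurable_fun [set: borelType X] (k x).
Hypothesis kconv : convex_kernel k.

Lemma U_conv (a b : X) (t : R) : 0 < t < 1 ->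
  (potential mu k (t *: a + (1 - t) *: b)%R <=
   t%:E * potential mu k a + (1 - t)%:E * potential mu k b)%E.
Proof.
move=> /andP[t0 t1].
rewrite /potential.
have ht0 : 0 <= t by exact: ltW.
have ht1 : 0 <= 1 - t by rewrite subr_ge0 ltW.
rewrite -(ge0_integralZl_EFin mu measurableT (fun y _ => k0 a y) (kmeas a) ht0).
rewrite -(ge0_integralZl_EFin mu measurableT (fun y _ => k0 b y) (kmeas b) ht1).
rewrite -ge0_integralD //; first last.
- by apply: measurable_funeM; exact: kmeas.
- by move=> y _; rewrite mule_ge0.
- by apply: measurable_funeM; exact: kmeas.
- by move=> y _; rewrite mule_ge0.
apply: (ge0_le_integral mu measurableT (fun y _ => k0 _ y) (kmeas _)).
  by apply: emeasurable_funD; apply: measurable_funeM; exact: kmeas.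
move=> y _.
have := kconv a y b y t; rewrite t0 t1 => /(_ isT).
by rewrite -scalerDl subrKC scale1r.
Qed.
End S3.

Section S4.
Context (R : realType) (X : topologicalLmodType R).

Lemma ray_bounded {w : X} {H : set X} {x : X} :
  hausdorff_space X -> w != 0 -> tvs_bounded H -> H x ->
  exists M : R, forall t, H (x + t *: w) -> t <= M.
Proof.
move=> hX w0 Hb Hx.
have w0' : (0 : X) != w by rewrite eq_sym.
have [W [oW W0 Ww]] := hausdorff_accessible hX w0'.
have nW : nbhs (0 : X) W.
  by apply: open_nbhs_nbhs; split => //; move: W0; rewrite inE.
have := @scale_continuous R X (0, 0) W.
rewrite /= scale0r => /(_ nW) [[A N] /= [nA nN] AN].
move: nA => /nbhs_normP [d /= d0 Ad].
have := @sub_continuous X (0, 0) N.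
rewrite /= subr0 => /(_ nN) [[V1 V2] /= [nV1 nV2] VN].
have [s s0 Hs] := Hb (V1 `&` V2) (filterI nV1 nV2).
exists ((s + 1) / d) => t Ht.
rewrite leNgt; apply/negP => tlt.
have t0 : 0 < t by apply: lt_trans tlt; rewrite divr_gt0 // addr_gt0.
have s1 : s < s + 1 by rewrite ltrDl.
have [a [a1 a2] xa] := Hs (s + 1) s1 x Hx.
have [b [b1 b2] xb] := Hs (s + 1) s1 _ Ht.
have wE : w = ((s + 1) / t) *: (b - a).
  rewrite mulrC -scalerA scalerBr xa xb addrAC subrr add0r scalerA.
  by rewrite mulVf ?gt_eqF // scale1r.
move: Ww; rewrite inE /=; apply.
rewrite wE; apply: (AN ((s + 1) / t, b - a)); split => /=.
  apply: Ad => /=.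
  rewrite sub0r normrN ger0_norm; last by rewrite divr_ge0 // ltW // addr_gt0.
  by rewrite ltr_pdivrMr // mulrC -ltr_pdivrMr.
by apply: (VN (b, a)); split.
Qed.

Lemma line_cont {x w : X} {tau : R} {B : set X} :
  nbhs (x + tau *: w) B ->
  exists2 d : R, 0 < d & forall u : R, `|tau - u| < d -> B (x + u *: w).
Proof.
move=> nB.
have := @add_continuous X (x, tau *: w) B nB.
move=> [[P1 P2] /= [nP1 nP2] PB].
have := @scale_continuous R X (tau, w) P2 nP2.
move=> [[A N] /= [nA nN] AN].
move: nA => /nbhs_normP [d /= d0 Ad].
exists d => // u ud.
apply: (PB (x, u *: w)); split => /=; first exact: nbhs_singleton.
apply: (AN (u, w)); split => //=; last exact: nbhs_singleton.
exact: Ad.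
Qed.

Lemma ray_exit (w : X) (H : set X) (x : X) :
  hausdorff_space X -> w != 0 -> tvs_bounded H -> H x ->
  exists2 tau : R, 0 <= tau & boundary H (x + tau *: w).
Proof.
move=> hX w0 Hb Hx.
have [xi|xni] := pselect (interior H x); last first.
  exists 0 => //; rewrite scale0r addr0; split => //; exact: subset_closure.
pose S := [set t : R | 0 <= t /\ forall u, 0 <= u <= t -> interior H (x + u *: w)].
have [M HM] := ray_bounded hX w0 Hb Hx.
have S0 : S 0.
  split => // u; rewrite -eq_le => /eqP <-; by rewrite scale0r addr0.
have supS : has_sup S.
  split; first by exists 0.
  exists M => t [t0 Ht]; apply: HM; apply: interior_subset; apply: Ht.
  by rewrite t0 lexx.
pose tau := sup S.
have tau0 : 0 <= tau := sup_upper_bound supS S0.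
exists tau => //; split.
- move=> B nB.
  have [d d0 Hd] := line_cont nB.
  have [u Su ud] := sup_adherent d0 supS.
  exists (x + u *: w); split.
    by apply: interior_subset; apply: Su.2; rewrite Su.1 lexx.
  apply: Hd; rewrite ger0_norm; first by rewrite ltrBlDr -ltrBlDl.
  by rewrite subr_ge0; exact: sup_upper_bound.
- move=> hi.
  have [d d0 Hd] := line_cont (nbhs_interior hi).
  have Sd : S (tau + d / 2).
    split; first by rewrite addr_ge0 // divr_ge0 // ltW.
    move=> u /andP[u0 ud].
    have [ut|tu] := ltP u tau.
      have [s Ss us] : exists2 s, S s & tau - (tau - u) < s by apply: sup_adherent supS; rewrite subr_gt0.
      move: us; rewrite opprB addrC subrK => us.
      by apply: Ss.2; rewrite u0 ltW.
    apply: Hd; rewrite distrC ger0_norm ?subr_ge0 //.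
    rewrite ltrBlDl (le_lt_trans ud) // ltrD2l.
    by rewrite ltr_pdivrMr // ltr_pMr // ltr1n.
  have := sup_upper_bound supS Sd.
  by rewrite -/tau gerDl leNgt divr_gt0.
Qed.
End S4.

Section S5.
Context (R : realType) (X : topologicalLmodType R) (k : X -> X -> \bar R).
Hypothesis klsc : lower_semicontinuous (fun p : X * X => k p.1 p.2).

Lemma tube (K : set X) (b : X) (a : R) : compact K ->
  (forall y, K y -> (a%:E < k b y)%E) ->
  \forall x \near b, forall y, K y -> (a%:E < k x y)%E.
Proof.
move=> /compact_near_coveringP cK Kb.
apply: (cK X (nbhs b) (fun x y => (a%:E < k x y)%E)).
move=> y Ky.
have [V nV HV] := klsc (b, y) a (Kb y Ky).
move: nV => [[A B] /= [nA nB] AB].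
exists (B, A) => //= -[yy xx] /= [Byy Axx].
by apply: (HV (xx, yy)); apply: AB.
Qed.
End S5.

Section Main.
Import HBNNSimple.
Context (R : realType) (X : topologicalLmodType R) (k : X -> X -> \bar R).
Context (mu : probability (borelType X) R).
Hypothesis hX : hausdorff_space X.
Hypothesis k0 : forall x y, (0 <= k x y)%E.
Hypothesis klsc : lower_semicontinuous (fun p : X * X => k p.1 p.2).
Hypothesis reg : regular_measure mu.

Lemma compact_meas {K : set X} : compact K -> @measurable _ (borelType X) K.
Proof.
move=> /(compact_closed hX) cK.
rewrite -[K]setCK; apply: measurableC; apply: sub_sigma_algebra.
exact: closed_openC.
Qed.

Lemma U_lsc : lower_semicontinuous (potential mu k).
Proof.
move=> b c cU.
have [c0|c0] := ltP c 0.
  exists setT; first exact: filterT.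
  move=> x _; apply: (lt_le_trans _ (integral_ge0 _ _)).
    by rewrite lte_fin.
  by move=> y _; exact: k0.
move: cU; rewrite /potential ge0_integralTE; last by move=> y; exact: k0.
move=> /ereal_sup_gt [_ [h hk <-] ch].
rewrite sintegralE fsbig_finite /= in ch; last exact: fimfunP.
set s := enum_fset _ in ch.
have us : uniq s := fset_uniq _.
have s_ge0 r : r \in s -> 0 <= r.
  rewrite in_fset_set; last exact: fimfunP.
  by rewrite inE => -[y _ <-]; exact: fun_ge0.
pose A r := h @^-1` [set r].
have mA r : @measurable _ (borelType X) (A r) := measurable_sfunP h (measurable_set1 r).
pose ST := (\sum_(r <- s) (r%:E * mu (A r))%E)%R.
have mfin r : mu (A r) \is a fin_num := fin_num_measure mu _ (mA r).
have STfin : ST \is a fin_num by apply/sum_fin_numP => r _ _; rewrite fin_numM.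
pose Sr := fine ST.
have STE : ST = Sr%:E by rewrite fineK.
have cS : c < Sr by rewrite -lte_fin -STE.
have Sr0 : 0 < Sr by apply: le_lt_trans cS.
pose th := (c + Sr) / (2 * Sr).
have th0 : 0 < th by rewrite divr_gt0 // ?mulr_gt0 // ltr_pwDr.
have thE : th * Sr = (c + Sr) / 2.
  rewrite /th; field; rewrite ?gt_eqF // ?mulf_neq0 // ?gt_eqF //.
have thS : c < th * Sr by rewrite thE midf_lt.
have th1 : th < 1.
  rewrite /th ltr_pdivrMr ?mulr_gt0 // mul1r; lra.
have csum : (c%:E < \sum_(r <- s) ((th * r)%:E * mu (A r))%E)%E.
  have -> : (\sum_(r <- s) ((th * r)%:E * mu (A r))%E)%R = (th%:E * ST)%E.
    rewrite fin_num_sume_distrr //; last first.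
      by move=> r t _ _; rewrite fin_num_adde_defl // fin_numM.
    by apply: eq_bigr => r _; rewrite EFinM muleA.
  by rewrite STE -EFinM lte_fin.
have rcase r : r \in s -> r = 0 \/ 0 < r.
  by move=> /s_ge0; rewrite le_eqVlt => /orP[/eqP <-|]; [left|right].
have afin r : r \in s -> ((th * r)%:E * mu (A r))%E \is a fin_num.
  by move=> _; rewrite fin_numM.
have happ r (e : R) : r \in s -> (e%:E < (th * r)%:E * mu (A r))%E ->
    exists K : set X, (compact K /\ K `<=` A r) /\ (e%:E < (th * r)%:E * mu K)%E.
  move=> rs he.
  have [r0|r0] := rcase r rs.
    exists set0; split; first by split; [exact: compact0|exact: sub0set].
    by move: he; rewrite r0 mulr0 !mul0e.
  have thr : 0 < th * r by rewrite mulr_gt0.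
  move: he; rewrite -lte_pdivrMl // (reg (A r) (mA r)).1 => he.
  have [_ [K [cK KA] <-] hK] := ereal_sup_gt he.
  by exists K; split => //; rewrite -lte_pdivrMl.
have [F [HF HFs]] := @fin_sum_approx R R (set X) set0 s
  (fun r => ((th * r)%:E * mu (A r))%E) (fun r K => ((th * r)%:E * mu K)%E)
  (fun r K => compact K /\ K `<=` A r) c us afin happ csum.
pose G r := if r \in s then F r else set0.
have GA r y : G r y -> h y = r.
  rewrite /G; case: ifPn => [rs /(HF r rs).2|_ //].
  by rewrite /A /preimage /= => ->.
have cG r : compact (G r).
  by rewrite /G; case: ifPn => [rs|_]; [exact: (HF r rs).1|exact: compact0].
have near1 r : r \in s ->
    \forall x \near b, forall y, G r y -> ((th * r)%:E <= k x y)%E.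
  move=> rs; have [r0|r0] := rcase r rs.
    by apply: nearW => x y _; rewrite r0 mulr0; exact: k0.
  have := @tube R X k klsc (G r) b (th * r) (cG r).
  have Hb : forall y, G r y -> ((th * r)%:E < k b y)%E.
    move=> y /GA hy; apply: (lt_le_trans _ (hk y)); rewrite hy lte_fin.
    by rewrite gtr_pMl.
  move=> /(_ Hb); apply: filterS => x Hx y Gy.
  exact: ltW (Hx y Gy).
have := near_all near1.
move=> nV; exists [set x | forall r, r \in s -> forall y, G r y ->
  ((th * r)%:E <= k x y)%E] => // x Hx.
pose f r (y : borelType X) := ((th * r)%:E * (\1_(G r) y)%:E)%E.
have mG r : @measurable _ (borelType X) (G r) := compact_meas (cG r).
have mf r : measurable_fun [set: borelType X] (f r).
  apply: measurable_funeM; apply/measurable_EFinP.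
  exact: measurable_indic.
have f0 r y : [set: borelType X] y -> (0 <= f r y)%E.
  move=> _; rewrite /f; case: (boolP (r \in s)) => rs.
    apply: mule_ge0; rewrite lee_fin; last by rewrite indicE ler0n.
    by apply: mulr_ge0; [exact: ltW | exact: s_ge0].

  by rewrite /G (negbTE rs) indic0 mule0.
apply: (lt_le_trans HFs).
have -> : ((\sum_(i <- s) ((th * i)%:E * mu (F i))%E)%R =
    \int[mu]_(y in [set: borelType X]) (\sum_(r <- s) f r y)%R)%E.
  rewrite ge0_integral_sum //.
  apply: eq_big_seq => r rs.
  rewrite /f ge0_integralZl_EFin //.
  - by rewrite integral_indic // setIT /G rs.
  - by apply/measurable_EFinP; exact: measurable_indic.
  - by apply: mulr_ge0; [exact: ltW | exact: s_ge0].
refine (@ge0_le_integral _ _ _ mu setT measurableT (fun y => (\sum_(r <- s) f r y)%R) (k x) _ _ (@k_meas R X k klsc x) _).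
- by move=> y _; apply: sume_ge0 => r _; exact: f0.
- exact: emeasurable_sum.
move=> y _.
have [[r rs Gy]|nG] := pselect (exists2 r, r \in s & G r y).
  rewrite (bigD1_seq r) //= big1_seq ?adde0.
    by rewrite /f indicE mem_set // mule1; exact: Hx.
  move=> r' /andP[r'r r's]; rewrite /f indicE memNset ?mule0 //.
  by move=> Gr'; move: r'r; rewrite -(GA _ _ Gr') (GA _ _ Gy) eqxx.
rewrite big1_seq; first exact: k0.
move=> r [] rs; rewrite /f indicE memNset ?mule0 //.
by move=> Gy; apply: nG; exists r.
Qed.
End Main.

Theorem lemma3p7 (R : realType) (X : topologicalLmodType R)
  (k : X -> X -> \bar R) (H : set X) (mu : probability (borelType X) R) :
  hausdorff_space X ->
  (exists x : X, x != 0) ->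
  (forall x y, (0 <= k x y)%E) ->
  lower_semicontinuous (fun p : X * X => k p.1 p.2) ->
  symmetric_kernel k ->
  convex_kernel k ->
  tvs_bounded H ->
  regular_measure mu ->
  ereal_sup [set potential mu k x | x in H] =
  ereal_sup [set potential mu k x | x in boundary H].
Proof.
move=> hX [v v0] k0 klsc ksym kconv Hb reg.
have kmeas := @k_meas R X k klsc.
have U0 y : (0 <= potential mu k y)%E.
  by apply: integral_ge0 => z _; exact: k0.
apply/eqP; rewrite eq_le; apply/andP; split.
- apply: ge_ereal_sup => _ [x Hx <-].
  set S := ereal_sup [set potential mu k x | x in boundary H].
  have ubB y : boundary H y -> (potential mu k y <= S)%E.
    by move=> By; apply: ereal_sup_ubound; exists y.
  have [t1 t10 B1] := @ray_exit R X v H x hX v0 Hb Hx.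
  have v0' : - v != 0 by rewrite oppr_eq0.
  have [t2 t20 B2] := @ray_exit R X (- v) H x hX v0' Hb Hx.
  have [t1z|t1p] := eqVneq t1 0.
    by move: B1; rewrite t1z scale0r addr0; exact: ubB.
  have [t2z|t2p] := eqVneq t2 0.
    by move: B2; rewrite t2z scale0r addr0; exact: ubB.
  have t1g : 0 < t1 by rewrite lt_def t1p.
  have t2g : 0 < t2 by rewrite lt_def t2p.
  pose l := t2 / (t1 + t2).
  have l0 : 0 < l by rewrite divr_gt0 // addr_gt0.
  have l1 : l < 1 by rewrite ltr_pdivrMr ?addr_gt0 // mul1r ltrDr.
  have lt : l * t1 - (1 - l) * t2 = 0.
    rewrite /l; field; rewrite gt_eqF // addr_gt0 //.
  have xE : x = l *: (x + t1 *: v) + (1 - l) *: (x + t2 *: - v).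
    rewrite !scalerDr !scalerA scalerN addrACA -scalerDl -scalerBl.
    by rewrite subrKC scale1r lt scale0r addr0.
  rewrite xE.
  apply: (le_trans (@U_conv R X k mu k0 kmeas kconv _ _ l _)).
    by rewrite l0 l1.
  have hl : (0 <= l%:E)%E by rewrite lee_fin ltW.
  have hl' : (0 <= (1 - l)%:E)%E by rewrite lee_fin subr_ge0 ltW.
  apply: (le_trans (leeD (lee_wpmul2l hl (ubB _ B1)) (lee_wpmul2l hl' (ubB _ B2)))).
  by rewrite -ge0_muleDl // -EFinD subrKC mul1e.
- apply: ge_ereal_sup => _ [b Bb <-].
  set S := ereal_sup [set potential mu k x | x in H].
  rewrite leNgt; apply/negP => hlt.
  have [c [Sc cU]] : exists c : R, (S <= c%:E)%E /\ (c%:E < potential mu k b)%E.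
    move: hlt; case: S => [r| |].
    - by move=> h; exists r.
    - by rewrite ltNge leey.
    - move=> _; exists (-1); split; first exact: leNye.
      by apply: (lt_le_trans _ (U0 b)); rewrite lte_fin ltrN10.
  have [V nV HV] := @U_lsc R X k mu hX k0 klsc reg b c cU.
  have [y [Hy Vy]] := Bb.1 V nV.
  have : (potential mu k y <= S)%E by apply: ereal_sup_ubound; exists y.
  move=> /le_trans /(_ Sc); rewrite leNgt => /negP; apply.
  exact: HV.
Qed.
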